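(* Let $X$ be a compact, Hausdorff, totally disconnected topological group and $G$ a dense subgroup of $X$, acting on $X$ by left multiplication. Let $k$ be a field of characteristic $0$ and $T$ the ring of locally constant functions $X\to k$, with $G$ acting on $T$ via $\alpha$ given by $(\alpha(g)t)(x)=t(g^{-1}x)$. Then the skew group ring $T*_{\alpha}G$ is simple.
   Context: The skew group ring $T*_{\alpha}G$ is the free left $T$-module with basis $G$ (elements are finite sums $\sum t_g g$, $t_g\in T$), with multiplication determined by those of $T$ and $G$ and the rule $g t=\alpha(g)(t)\, g$ for $g\in G$, $t\in T$, extended linearly. *)

(* Defs.v *)
From HB Require Import structures.
From mathcomp Require Import all_boot all_order all_algebra.
From mathcomp Require Import all_classical all_reals all_analysis.
Set Implicit Arguments. Unset Strict Implicit. Unset Printing Implicit Defensive.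
Import Order.TTheory GRing.Theory Num.Theory.
Local Open Scope classical_set_scope.
Local Open Scope ring_scope.

Section Defs.
Variable X : topologicalType.
Variables (mul : X -> X -> X) (inv : X -> X) (one : X).

Definition is_topological_group : Prop :=
  [/\ (forall x y z, mul x (mul y z) = mul (mul x y) z),
      (forall x, mul one x = x /\ mul x one = x),
      (forall x, mul (inv x) x = one /\ mul x (inv x) = one),
      continuous (fun p : X * X => mul p.1 p.2) &
      continuous inv].

Definition is_subgroup (G : set X) : Prop :=
  [/\ G one, (forall x y, G x -> G y -> G (mul x y)) & (forall x, G x -> G (inv x))].

Variable k : fieldType.

Definition locally_constant (t : X -> k) : Prop :=
  forall x, \forall y \near x, t y = t x.

Definition alpha (g : X) (t : X -> k) : X -> k := fun x => t (mul (inv g) x).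

(* Elements of the skew group ring T *_alpha G: an element  sum_g t_g g
   is represented by its coefficient function a : X -> (X -> k), g |-> t_g,
   required to take values in T, vanish outside G and have finite support. *)
Definition skew_elt (G : set X) (a : X -> X -> k) : Prop :=
  [/\ (forall g, locally_constant (a g)),
      (forall g, ~ G g -> a g = (fun _ => 0)) &
      finite_set [set g | a g <> (fun _ => 0)]].

Definition skew_zero : X -> X -> k := fun _ _ => 0.
Definition skew_one : X -> X -> k := fun g _ => if g == one then 1 else 0.
Definition skew_add (a b : X -> X -> k) : X -> X -> k := fun g x => a g x + b g x.
Definition skew_opp (a : X -> X -> k) : X -> X -> k := fun g x => - a g x.

(* Multiplication determined by  (t g)(s h) = t alpha(g)(s) (g h):
   coefficient at h of a * b is  sum_{g in G} a_g * alpha(g)(b_{g^-1 h}). *)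
Definition skew_mul (G : set X) (a b : X -> X -> k) : X -> X -> k :=
  fun h x => \sum_(g \in G) (a g x * alpha g (b (mul (inv g) h)) x).

Definition skew_ideal (G : set X) (I : set (X -> X -> k)) : Prop :=
  [/\ I `<=` skew_elt G,
      I skew_zero,
      (forall a b, I a -> I b -> I (skew_add a b)),
      (forall a, I a -> I (skew_opp a)) &
      (forall r a, skew_elt G r -> I a -> I (skew_mul G r a) /\ I (skew_mul G a r))].

Definition skew_simple (G : set X) : Prop :=
  skew_one <> skew_zero /\
  forall I, skew_ideal G I -> I = [set skew_zero] \/ I = skew_elt G.

End Defs.

(* Main.v *)
Require Import Defs.
From HB Require Import structures.
From mathcomp Require Import all_boot all_order all_algebra.
From mathcomp Require Import all_classical all_reals all_analysis.
Set Implicit Arguments. Unset Strict Implicit. Unset Printing Implicit Defensive.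
Import Order.TTheory GRing.Theory Num.Theory.
Local Open Scope classical_set_scope.
Local Open Scope ring_scope.

Lemma clopen_part (T : topologicalType) (C U V : set T) :
  clopen C -> open U -> open V -> U `&` V = set0 -> C `<=` U `|` V ->
  clopen (C `&` U).
Proof.
move=> [oC cC] oU oV UV CUV; split; first exact: openI.
have -> : C `&` U = C `&` ~` V.
  apply/seteqP; split=> w [Cw Hw]; split => //.
    by move=> Vw; have : (U `&` V) w by []; rewrite UV.
  by case: (CUV w Cw).
by apply: closedI => //; exact: open_closedC.
Qed.

Lemma zero_dim (T : topologicalType) : hausdorff_space T -> compact [set: T] ->
  totally_disconnected [set: T] ->
  forall x y : T, x <> y -> exists U, [/\ clopen U, U x & ~ U y].
Proof.
move=> hT cT tdT x y xy; apply: contrapT => Hn.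
have H : forall U, clopen U -> U x -> U y.
  move=> U cU Ux; apply: contrapT => nUy; apply: Hn; by exists U.
pose Q := [set z | forall U, clopen U -> U x -> U z].
have Qx : Q x by [].
have Qy : Q y by move=> U cU Ux; exact: H.
have QE : Q = \bigcap_(U in [set U | clopen U /\ U x]) U.
  apply/seteqP; split=> z Hz.
    by move=> U [cU Ux]; exact: Hz.
  by move=> U cU Ux; apply: Hz.
have cQ : closed Q by rewrite QE; apply: closed_bigI => U [[]].
have conQ : connected Q.
  move=> B [z Bz] [C1 oC1 BE1] [C2 cC2 BE2].
  have cB : closed B by rewrite BE2; exact: closedI.
  pose A2 := Q `&` ~` C1.
  have cA2 : closed A2 by apply: closedI => //; exact: open_closedC.
  have nT := compact_normal hT cT.
  have BA2 : set_nbhs B (~` A2).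
    move=> w Bw; apply: open_nbhs_nbhs; split; first by rewrite openC.
    by move=> [_]; apply; move: Bw; rewrite BE1 => -[].
  have [N NB clN] := nT B cB (~` A2) BA2.
  pose U := N°; pose V := ~` closure N.
  have oU : open U by exact: open_interior.
  have oV : open V by apply: closed_openC; exact: closed_closure.
  have UV : U `&` V = set0.
    apply/seteqP; split=> // w [Uw]; apply; apply: subset_closure.
    exact: interior_subset.
  have BU : B `<=` U by move=> w Bw; exact: NB.
  have QUV : Q `<=` U `|` V.
    move=> q Qq; have [C1q|nC1q] := pselect (C1 q).
      by left; apply: BU; rewrite BE1.
    by right=> /clN; apply; split.
  pose K := ~` (U `|` V).
  have cK : compact K.
    apply: (subclosed_compact _ cT) => //.
    by apply: open_closedC; exact: openU.
  pose F := filter_from [set C | clopen C /\ C x]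
     (fun C => [set D : set T | [/\ clopen D, D x & D `<=` C]]).
  have FF : Filter F.
    apply: filter_from_filter; first by exists setT; split => //; exact: clopenT.
    move=> C D [cC Cx] [cD Dx]; exists (C `&` D); first by split => //; exact: clopenI.
    by move=> E [cE Ex ECD]; split; split => // w /ECD [].
  have := (iffLR (compact_near_coveringP K)) cK (set T) F (fun D w => ~ D w) FF.
  case.
    move=> w Kw; have nQw : ~ Q w by move=> /QUV.
    have [C [cC Cx nCw]] : exists C, [/\ clopen C, C x & ~ C w].
      apply: contrapT => Hc; apply: nQw => C cC Cx; apply: contrapT => nCw.
      by apply: Hc; exists C.
    exists (~` C, [set D : set T | [/\ clopen D, D x & D `<=` C]]).
      split; last by exists C.
      by apply: open_nbhs_nbhs; split => //; case: cC => _ ?; exact: closed_openC.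
    by case=> w' D [/= nCw' [_ _ DC]] Dw'; apply: nCw'; exact: DC.
  move=> C0 [cC0 C0x] HC0.
  have KC0 : K `<=` ~` C0 by apply: HC0; split.
  have C0UV : C0 `<=` U `|` V.
    by move=> w C0w; apply: contrapT => nw; exact: (KC0 w nw).
  have [Ux|nUx] := pselect (U x).
    have cE := clopen_part cC0 oU oV UV C0UV.
    have QU : Q `<=` U by move=> q Qq; have [] := Qq _ cE (conj C0x Ux).
    apply/seteqP; split; first by move=> w; rewrite BE1 => -[].
    move=> q Qq; have [C1q|nC1q] := pselect (C1 q); first by rewrite BE1.
    have : (U `&` V) q by split; [exact: QU | move=> /clN; apply; split].
    by rewrite UV.
  have Vx : V x by case: (QUV x Qx).
  have VU : V `&` U = set0 by rewrite setIC.
  have C0VU : C0 `<=` V `|` U by rewrite setUC.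
  have cE := clopen_part cC0 oV oU VU C0VU.
  have Qz : Q z by move: Bz; rewrite BE1 => -[].
  have [_ Vz] := Qz _ cE (conj C0x Vx).
  have : (U `&` V) z by split; [exact: BU | exact: Vz].
  by rewrite UV.
have : connected_component [set: T] x y.
  by exists Q => //; split.
by rewrite tdT // => /= yx; apply: xy.
Qed.

Section Main.
Variables (X : topologicalType) (mul : X -> X -> X) (inv : X -> X) (one : X)
  (G : set X) (k : fieldType).
Hypothesis tg : is_topological_group mul inv one.
Hypothesis sg : is_subgroup mul inv one G.

Let mulA x y z : mul x (mul y z) = mul (mul x y) z.
Proof. by case: tg. Qed.
Let mul1g x : mul one x = x.
Proof. by case: tg => _ H _ _ _; case: (H x). Qed.
Let mulg1 x : mul x one = x.
Proof. by case: tg => _ H _ _ _; case: (H x). Qed.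
Let mulVg x : mul (inv x) x = one.
Proof. by case: tg => _ _ H _ _; case: (H x). Qed.
Let mulgV x : mul x (inv x) = one.
Proof. by case: tg => _ _ H _ _; case: (H x). Qed.
Let hmul : continuous (fun p : X * X => mul p.1 p.2).
Proof. by case: tg. Qed.
Let G1 : G one.
Proof. by case: sg. Qed.
Let GV x : G x -> G (inv x).
Proof. by case: sg => _ _; apply. Qed.

Let inv1 : inv one = one.
Proof. by rewrite -[inv one]mulg1 mulVg. Qed.
Let mulKg g x : mul (inv g) (mul g x) = x.
Proof. by rewrite mulA mulVg mul1g. Qed.
Let mulKVg g x : mul g (mul (inv g) x) = x.
Proof. by rewrite mulA mulgV mul1g. Qed.
Let invK g : inv (inv g) = g.
Proof. by rewrite -[inv (inv g)]mulg1 -(mulVg g) mulA mulVg mul1g. Qed.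
Let mulgI g x y : mul g x = mul g y -> x = y.
Proof. by move=> /(congr1 (mul (inv g))); rewrite !mulKg. Qed.
Let mulIg g x y : mul x g = mul y g -> x = y.
Proof.
by move=> /(congr1 (fun z => mul z (inv g))) /=; rewrite -!mulA mulgV !mulg1.
Qed.
Let eq_mulV g h c : (mul (inv g) h == c) = (h == mul g c).
Proof. by apply/eqP/eqP => [<-|->]; rewrite ?mulKVg ?mulKg. Qed.

Let cont_l c : continuous (fun x => mul c x).
Proof.
move=> x; have H1 : {for x, continuous (fun y : X => (c, y))}.
  exact: cvg_pair (cvg_cst _) cvg_id.
by have := continuous_comp H1 (@hmul (c, x)).
Qed.
Let cont_r c : continuous (fun x => mul x c).
Proof.
move=> x; have H1 : {for x, continuous (fun y : X => (y, c))}.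
  exact: cvg_pair cvg_id (cvg_cst _).
by have := continuous_comp H1 (@hmul (x, c)).
Qed.

Definition sd (s : X -> k) (g : X) : X -> X -> k :=
  fun h x => if h == g then s x else 0.
Definition ind (U : set X) : X -> k := fun z => if `[< U z >] then 1 else 0.

Let lc_cst (c : k) : locally_constant (fun _ : X => c).
Proof. by move=> x; apply: nearW. Qed.
Let lc_comp (t : X -> k) (f : X -> X) : locally_constant t -> continuous f ->
  locally_constant (fun x => t (f x)).
Proof. by move=> ht hf x; have := @hf x _ (ht (f x)). Qed.
Let lc_op (op : k -> k -> k) (s t : X -> k) : locally_constant s -> locally_constant t ->
  locally_constant (fun x => op (s x) (t x)).
Proof. by move=> hs ht x; apply: filterS2 (hs x) (ht x) => y /= -> ->. Qed.
Let lc_map (f : k -> k) (u : X -> k) : locally_constant u ->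
  locally_constant (fun x => f (u x)).
Proof. by move=> hu x; apply: filterS (hu x) => y /= ->. Qed.
Let lc_alpha g (t : X -> k) : locally_constant t -> locally_constant (alpha mul inv g t).
Proof. by move=> ht; apply: lc_comp => //; exact: cont_l. Qed.
Let lc_ind U : clopen U -> locally_constant (ind U).
Proof.
move=> [oU cU] x; have [Ux|nUx] := pselect (U x).
  have : nbhs x U by apply: open_nbhs_nbhs.
  by apply: filterS => y Uy; rewrite /ind (asboolT Uy) (asboolT Ux).
have : nbhs x (~` U) by apply: open_nbhs_nbhs; split => //; exact: closed_openC.
by apply: filterS => y nUy; rewrite /ind (asboolF nUy) (asboolF nUx).
Qed.

Let sd_elt (s : X -> k) g : G g -> locally_constant s -> skew_elt G (sd s g).
Proof.
move=> Gg hs; split.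
- by move=> h; rewrite /sd; case: (h == g) => //; exact: lc_cst.
- move=> h nGh; apply/funext => x; rewrite /sd; case: eqP => // hg.
  by subst; contradiction.
- apply: (sub_finite_set _ (finite_set1 g)) => h /=; rewrite /sd.
  by case: eqP => // _ H; exfalso; apply: H.
Qed.

Let fsum_one (A : set X) i0 (F : X -> k) :
  (forall i, i <> i0 -> F i = 0) -> A i0 -> \sum_(i \in A) F i = F i0.
Proof.
move=> HF Ai0; rewrite -(fsbig_widen [set i0] A F) ?fsbig_set1 //.
- by move=> i ->.
- by move=> i [_ /= ni]; apply: HF.
Qed.
Let fsum_none (A : set X) i0 (F : X -> k) :
  (forall i, i <> i0 -> F i = 0) -> ~ A i0 -> \sum_(i \in A) F i = 0.
Proof. by move=> HF nA; apply: fsbig1 => i Ai; apply: HF => e; subst. Qed.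

Let mulL (s : X -> k) g (r : X -> X -> k) : G g -> skew_mul mul inv G (sd s g) r =
  fun h x => s x * r (mul (inv g) h) (mul (inv g) x).
Proof.
move=> Gg; apply/funext => h; apply/funext => x; rewrite /skew_mul.
rewrite (fsum_one _ Gg); first by rewrite /sd eqxx.
by move=> i ni /=; rewrite /sd; case: eqP => // _; rewrite mul0r.
Qed.

Let mulR (b : X -> X -> k) (s : X -> k) : skew_elt G b -> skew_mul mul inv G b (sd s one) =
  fun h x => b h x * s (mul (inv h) x).
Proof.
move=> [_ bG _]; apply/funext => h; apply/funext => x; rewrite /skew_mul.
have [Gh|nGh] := pselect (G h).
  rewrite (fsum_one _ Gh); first by rewrite /alpha /sd mulVg eqxx.
  move=> i nih /=; rewrite /alpha /sd eq_mulV mulg1; case: eqP; last by rewrite mulr0.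
  by move=> e; subst.
rewrite (fsum_none _ nGh); first by rewrite (bG h nGh) mul0r.
move=> i nih /=; rewrite /alpha /sd eq_mulV mulg1; case: eqP; last by rewrite mulr0.
by move=> e; subst.
Qed.

Let LL1 (s u : X -> k) : skew_mul mul inv G (sd s one) (sd u one) = sd (fun x => s x * u x) one.
Proof.
rewrite mulL //; apply/funext => h; apply/funext => x; rewrite /sd inv1 !mul1g.
by case: eqP => _; rewrite ?mulr0.
Qed.

Let shift (t : X -> k) g : G g ->
  skew_mul mul inv G (sd t g) (sd (fun _ => 1) (inv g)) = sd t one.
Proof.
move=> Gg; rewrite mulL //; apply/funext => h; apply/funext => x; rewrite /sd.
rewrite eq_mulV mulgV; by case: eqP => _; rewrite ?mulr0 ?mulr1.
Qed.

Let conj_sd (u : X -> k) g : G g ->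
  skew_mul mul inv G (skew_mul mul inv G (sd (fun _ => 1) g) (sd u one))
    (sd (fun _ => 1) (inv g)) = sd (alpha mul inv g u) one.
Proof.
move=> Gg.
have -> : skew_mul mul inv G (sd (fun _ => 1) g) (sd u one) =
    sd (fun x => u (mul (inv g) x)) g.
  rewrite mulL //; apply/funext => h; apply/funext => x; rewrite /sd eq_mulV mulg1.
  by case: eqP => _; rewrite ?mul1r ?mulr0.
by rewrite shift.
Qed.

Lemma filter_lt (T : eqType) (x : T) s : x \in s ->
  (size (seq.filter (predC1 x) s) < size s)%N.
Proof.
elim: s => //= y s IH; rewrite inE => /orP[/eqP ->|xs].
  by rewrite /= eqxx /= ltnS size_filter count_size.
case: (y != x) => /=; first by rewrite ltnS IH.
by rewrite ltnS size_filter count_size.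
Qed.

Theorem main_simple : compact [set: X] -> hausdorff_space X ->
  totally_disconnected [set: X] -> dense G ->
  @skew_simple X mul inv one k G.
Proof.
move=> cX hX tdX dG.
have zd := zero_dim hX cX tdX.
split.
  move=> /(congr1 (fun f => f one one)); rewrite /skew_one /skew_zero eqxx.
  by apply/eqP; exact: oner_neq0.
move=> II [IE I0 Iadd Iopp Imul].
have [[a [Ia anz]]|Hn] := pselect (exists a, II a /\ a <> skew_zero k); last first.
  left; apply/seteqP; split=> [b Ib|b ->] //=.
  by apply: contrapT => nb; apply: Hn; exists b.
right.
have nz_ex : forall b : X -> X -> k, b <> skew_zero k ->
    exists g0, b g0 <> (fun _ => 0).
  move=> b bnz; apply: contrapT => H; apply: bnz; apply/funext => g.
  by apply: contrapT => ng; apply: H; exists g.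
have stepA : exists t, [/\ locally_constant t, t <> (fun _ => 0) & II (sd t one)].
  have [s0 Hs0] : exists s : seq X, forall g, a g <> (fun _ => 0) -> g \in s.
    have [_ _ fa] := IE a Ia; have [s Es] := (iffLR (finite_seqP _)) fa.
    exists s => g ag.
    have : [set g | a g <> (fun _ => 0)] g by [].
    by rewrite Es.
  suff: forall n b s, (size s <= n)%N -> II b -> b <> skew_zero k ->
      (forall g, b g <> (fun _ => 0) -> g \in s) ->
      exists t, [/\ locally_constant t, t <> (fun _ => 0) & II (sd t one)].
    by move=> /(_ (size s0) a s0 (leqnn _) Ia anz Hs0).
  elim=> [|n IH] b s ss Ib bnz Hs.
    have [g0 bg0] := nz_ex b bnz.
    by move: (Hs g0 bg0); case: s ss Hs.
  have [g0 bg0] := nz_ex b bnz.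
  have [lcb bG fb] := IE b Ib.
  have Gg0 : G g0 by apply: contrapT => nG; apply: bg0; exact: bG g0 nG.
  have [[h [x [hg0 bhx]]] | Hno] :=
    pselect (exists h x, h <> g0 /\ b h x <> 0); last first.
    have bE : b = sd (b g0) g0.
      apply/funext => h; apply/funext => x; rewrite /sd; case: eqP => [->//|nh].
      by apply: contrapT => nb; apply: Hno; exists h, x.
    exists (b g0); split => //.
    have := (Imul (sd (fun _ => 1) (inv g0)) b (sd_elt (GV Gg0) (lc_cst 1)) Ib).2.
    by rewrite {1}bE shift.
  have neq : mul (inv g0) x <> mul (inv h) x.
    move=> e; apply: hg0; apply: (@mulIg (mul (inv g0) x)).
    by rewrite {1}e !mulKVg.
  have [U [cU Ua nUb]] := zd _ _ neq.
  pose s' := ind U.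
  pose c := skew_add (skew_mul mul inv G (sd (alpha mul inv g0 s') one) b)
    (skew_opp (skew_mul mul inv G b (sd s' one))).
  have cE : c = fun h' x' => b h' x' * (s' (mul (inv g0) x') - s' (mul (inv h') x')).
    rewrite /c mulL // mulR //; apply/funext => h'; apply/funext => x'.
    rewrite /skew_add /skew_opp /alpha inv1 !mul1g.
    by rewrite mulrBr mulrC.
  have Ic : II c.
    apply: Iadd; first apply: (Imul _ _ _ Ib).1.
      by apply: sd_elt => //; apply: lc_alpha; exact: lc_ind.
    by apply: Iopp; apply: (Imul _ _ _ Ib).2; apply: sd_elt => //; exact: lc_ind.
  have Hg0s : g0 \in s by exact: Hs.
  apply: (IH c (seq.filter (predC1 g0) s)) => //.
  - by rewrite -ltnS (leq_trans (filter_lt Hg0s) ss).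
  - move=> /(congr1 (fun f => f h x)); rewrite cE /skew_zero /s' /ind.
    by rewrite (asboolT Ua) (asboolF nUb) subr0 mulr1.
  - move=> g cg; rewrite mem_filter /=; apply/andP; split.
      apply/eqP => e; subst g; apply: cg; rewrite cE; apply/funext => x'.
      by rewrite subrr mulr0.
    apply: Hs => bg; apply: cg; rewrite cE; apply/funext => x'.
    by rewrite bg /= mul0r.
have [t [lct tnz It]] := stepA.
pose J u := locally_constant u /\ II (sd u one).
have J_mul : forall s u, locally_constant s -> J u -> J (fun x => s x * u x).
  move=> s u ls [lu Iu]; split; first exact: lc_op.
  by rewrite -LL1; apply: (Imul _ _ (sd_elt G1 ls) Iu).1.
have J_alpha : forall g u, G g -> J u -> J (alpha mul inv g u).
  move=> g u Gg [lu Iu]; split; first exact: lc_alpha.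
  rewrite -conj_sd //; apply: (Imul _ _ (sd_elt (GV Gg) (lc_cst 1)) _).2.
  exact: (Imul _ _ (sd_elt Gg (lc_cst 1)) Iu).1.
have J_add : forall u v, J u -> J v -> J (fun x => u x + v x).
  move=> u v [lu Iu] [lv Iv]; split; first exact: lc_op.
  have -> : sd (fun x => u x + v x) one = skew_add (sd u one) (sd v one).
    apply/funext => h; apply/funext => x; rewrite /skew_add /sd.
    by case: eqP => _; rewrite ?addr0.
  exact: Iadd.
have [x0 tx0] : exists x0, t x0 != 0.
  apply: contrapT => H; apply: tnz; apply/funext => x; apply/eqP.
  by apply: contrapT => nx; apply: H; exists x; apply/negP.
have cover : forall y, exists u, J u /\ u y != 0.
  move=> y; pose V := [set h | t (mul h y) != 0].
  have oV : open V.
    rewrite openE => h Vh; rewrite /interior.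
    have := lc_comp lct (@cont_r y) h.
    by move=> H; apply: filterS H => z /= e; rewrite /V /= e.
  have [h [Vh Gh]] : (V `&` G) !=set0.
    apply: dG => //; exists (mul x0 (inv y)).
    by rewrite /V /= -mulA mulVg mulg1.
  exists (alpha mul inv (inv h) t); split.
    by apply: J_alpha; [exact: GV | split].
  by rewrite /alpha invK.
pose F := filter_from J (fun u => [set v | J v /\ forall z, u z != 0 -> v z != 0]).
have FF : Filter F.
  apply: filter_from_filter; first by exists t; split.
  move=> u w Ju Jw.
  pose cu := fun z => if u z == 0 then (1 : k) else 0.
  pose m := fun z => u z + cu z * w z.
  have Jm : J m.
    apply: J_add => //; apply: J_mul => //.
    exact: (lc_map (fun a => if a == 0 then (1 : k) else 0) (proj1 Ju)).
  exists m => // v [Jv Hv]; split; split => // z nz; apply: Hv; rewrite /m /cu.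
    by rewrite (negbTE nz) mul0r addr0.
  have [e|nu] := eqVneq (u z) 0; first by rewrite /= e add0r mul1r.
  by rewrite /= mul0r addr0.
have := (iffLR (compact_near_coveringP [set: X])) cX (X -> k) F
  (fun v z => J v /\ v z != 0) FF.
case.
  move=> y _; have [u [Ju uy]] := cover y.
  exists ([set y' | u y' = u y],
          [set v | J v /\ forall z, u z != 0 -> v z != 0]).
    by split; [exact: (proj1 Ju) y | exists u].
  by case=> y' v [/= e [Jv Hv]]; split => //; apply: Hv; rewrite e.
move=> u Ju Hsub.
have uz : forall z, u z != 0.
  by move=> z; have [] := Hsub u (conj Ju (fun z h => h)) z Logic.I.
have Jone : J (fun _ => 1).
  have := J_mul (fun z => (u z)^-1) u (lc_map _ (proj1 Ju)) Ju.
  have -> // : (fun z => (u z)^-1 * u z) = fun _ => 1.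
  by apply/funext => z; rewrite mulVf.
apply/seteqP; split => // r Er.
have -> : r = skew_mul mul inv G r (sd (fun _ => 1) one).
  by rewrite mulR //; apply/funext => h; apply/funext => x; rewrite mulr1.
have [_ I1] := Jone.
exact: (Imul r _ Er I1).1.
Qed.

End Main.

Theorem proposition3p6 (X : topologicalType)
  (mul : X -> X -> X) (inv : X -> X) (one : X)
  (G : set X) (k : fieldType) :
  is_topological_group mul inv one ->
  compact [set: X] ->
  hausdorff_space X ->
  totally_disconnected [set: X] ->
  is_subgroup mul inv one G ->
  dense G ->
  [pchar k] =i pred0 ->
  @skew_simple X mul inv one k G.
Proof.
move=> tg cX hX tdX sg dG _.
exact: (@main_simple X mul inv one G k tg sg cX hX tdX dG).
Qed.
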